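(* With notation: $\xi=e^{i\pi/5}$, $\tau=\frac{1+\sqrt5}{2}$, $L(n)=\{\sum_{j=0}^9 n_j\xi^j: n_j\in\mathbb{N}_0,\ \sum_j n_j\le n\}\cap\mathbb{R}$, $\mathbb{Z}[\tau]=\mathbb{Z}+\mathbb{Z}\tau$, $x\mapsto x'$ the automorphism $a+b\sqrt5\mapsto a-b\sqrt5$ of $\mathbb{Q}[\sqrt5]$, and $\Sigma(\Omega)=\{x\in\mathbb{Z}[\tau]:x'\in\Omega\}$: for every integer $n\ge3$, $L(n)$ is a proper subset of $\Sigma([-n,n])\cap[-n,n]$. *)

(* Defs.v *)
From HB Require Import structures.
From mathcomp Require Import all_boot all_order all_algebra all_field.
Set Implicit Arguments. Unset Strict Implicit. Unset Printing Implicit Defensive.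
Import Order.TTheory GRing.Theory Num.Theory.
Local Open Scope ring_scope.

(* xi = e^{i pi/5}: the 5th root of -1 with minimal non-negative argument. *)
Definition xi : algC := 5.-root (-1).

Definition tau : algC := (1 + sqrtC 5) / 2.
(* image of tau under the automorphism a + b sqrt5 |-> a - b sqrt5 *)
Definition tau' : algC := (1 - sqrtC 5) / 2.

Definition L (n : nat) (x : algC) : Prop :=
  x \is Num.real /\
  exists c : 'I_10 -> nat,
    (\sum_(j < 10) c j <= n)%N /\ x = \sum_(j < 10) (c j)%:R * xi ^+ j.

Definition Ztau (x : algC) : Prop := exists a b : int, x = a%:~R + b%:~R * tau.

Definition Sigma (Om : algC -> Prop) (x : algC) : Prop :=
  exists a b : int, x = a%:~R + b%:~R * tau /\ Om (a%:~R + b%:~R * tau').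

Definition Icc (n : nat) (y : algC) : Prop :=
  y \is Num.real /\ - (n%:R) <= y /\ y <= n%:R.

(* Main.v *)
From Stdlib Require Import ZArith Lia.
Require Import Defs.
From HB Require Import structures.
From mathcomp Require Import all_boot all_order all_algebra all_field.
From mathcomp Require Import zify ring ssrZ.
Import Order.TTheory GRing.Theory Num.Theory.
Local Open Scope ring_scope.

Section ZS.
Local Open Scope Z_scope.
Lemma Zdesc_aux (N : nat) (p q : Z) :
  (Z.abs p + Z.abs q <= Z.of_nat N) -> (p * p + p * q - q * q = 0) -> p = 0 /\ q = 0.
Proof.
elim: N p q => [|N IH] p q hN he; first lia.
have [[k hk]|[k hk]] := Z.Even_or_Odd p; have [[m hm]|[m hm]] := Z.Even_or_Odd q; subst.
- have h : (k * k + k * m - m * m = 0) by nia.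
  case: (Z.eq_dec k 0) => hk0; case: (Z.eq_dec m 0) => hm0; try lia;
  have := IH k m; lia.
all: exfalso; nia.
Qed.

End ZS.

Lemma int_desc (p q : int) : p * p + p * q - q * q = 0 -> p = 0 /\ q = 0.
Proof.
move=> h; have := @Zdesc_aux (Z.abs_nat (ssrZ.Z_of_int p) + Z.abs_nat (ssrZ.Z_of_int q)) (ssrZ.Z_of_int p) (ssrZ.Z_of_int q).
lia.
Qed.
Notation s5 := (sqrtC (5 : algC)).

Lemma s5_ge0 : 0 <= s5. Proof. by rewrite sqrtC_ge0 ler0n. Qed.
Lemma s5_sq : s5 ^+ 2 = 5. Proof. exact: sqrtCK. Qed.
Lemma s5_real : s5 \is Num.real. Proof. exact: ger0_real s5_ge0. Qed.

Lemma sq_le (a b : algC) : 0 <= a -> 0 <= b -> a ^+ 2 <= b ^+ 2 -> a <= b.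
Proof. by move=> ha hb; rewrite (ler_pXn2r (n:=2)) // nnegrE. Qed.

Lemma s5_2 : 0 <= s5 - 2.
Proof. rewrite subr_ge0; apply: sq_le; rewrite ?ler0n ?s5_ge0 // s5_sq.
by rewrite -natrX ler_nat. Qed.
Lemma s5_3 : 0 <= 3 - s5.
Proof. rewrite subr_ge0; apply: sq_le; rewrite ?ler0n ?s5_ge0 // s5_sq.
by rewrite -natrX ler_nat. Qed.
Lemma s5_7 : 0 <= 7 - 3 * s5.
Proof. rewrite subr_ge0; apply: sq_le; rewrite ?ler0n ?mulr_ge0 ?ler0n ?s5_ge0 //.
rewrite exprMn s5_sq -subr_ge0 (_ : 7 ^+ 2 - 3 ^+ 2 * 5 = 4) ?ler0n //; ring. Qed.

Lemma tau2 : tau ^+ 2 = tau + 1.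
Proof.
apply/eqP; rewrite -subr_eq0.
have -> : tau ^+ 2 - (tau + 1) = (s5 ^+ 2 - 5) / 4 by rewrite /tau; field.
by rewrite s5_sq subrr mul0r.
Qed.

Lemma tau_sum : tau + tau' = 1. Proof. by rewrite /tau /tau'; field. Qed.
Lemma tau_prod : tau * tau' = -1.
Proof.
have -> : tau * tau' = (1 - s5 ^+ 2) / 4 by rewrite /tau /tau'; field.
by rewrite s5_sq; field.
Qed.

Lemma tau_irr (p q : int) : p%:~R + q%:~R * tau = 0 -> p = 0 /\ q = 0.
Proof.
move=> h; apply: int_desc.
have e : (p%:~R : algC) = - (q%:~R * tau) by apply/eqP; rewrite -subr_eq0 opprK h.
apply/eqP; rewrite -(intr_eq0 algC) !(intrD, intrM, intrN) e.
have -> : (- (q%:~R * tau)) * (- (q%:~R * tau)) + - (q%:~R * tau) * q%:~R - q%:~R * q%:~R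
   = (q%:~R * q%:~R : algC) * (tau ^+ 2 - tau - 1) by ring.
by rewrite tau2 (_ : tau + 1 - tau - 1 = 0) ?mulr0 //; ring.
Qed.

Lemma half_ge0 (a : algC) : 0 <= a -> 0 <= a / 2.
Proof. by move=> h; rewrite divr_ge0 ?ler0n. Qed.

Lemma tau_real : tau \is Num.real.
Proof. by rewrite /tau rpredM ?rpredD ?rpred1 ?s5_real ?rpredV ?realn. Qed.
Lemma tau'_real : tau' \is Num.real.
Proof. by rewrite /tau' rpredM ?rpredB ?rpred1 ?s5_real ?rpredV ?realn. Qed.

Lemma tau_gt0 : 0 < tau.
Proof.
rewrite /tau divr_gt0 ?ltr0n //; apply: (lt_le_trans ltr01).
by rewrite lerDl s5_ge0.
Qed.

Lemma tau'_lt0 : tau' < 0.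
Proof.
have -> : tau' = - (((s5 - 2) + 1) / 2) by rewrite /tau'; field.
rewrite oppr_lt0 divr_gt0 ?ltr0n //; apply: (lt_le_trans ltr01).
by rewrite lerDr s5_2.
Qed.

Lemma tau_t0 : tau ^+ 2 - tau - 1 = 0.
Proof. by rewrite tau2; ring. Qed.

Lemma three_tau : 0 <= 3 - tau.
Proof.
have -> : 3 - tau = ((3 - s5) + 2) / 2 by rewrite /tau; field.
by apply: half_ge0; rewrite addr_ge0 ?s5_3 ?ler0n.
Qed.

Definition rr : algC := sqrtC (3 - tau).
Definition yy : algC := tau / 2 + 'i * (rr / 2).

Lemma rr_real : rr \is Num.real.
Proof. by rewrite /rr sqrtC_real // three_tau. Qed.

Lemma yy_quad : yy ^+ 2 - tau * yy + 1 = 0.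
Proof.
have -> : yy ^+ 2 - tau * yy + 1 = (4 - tau ^+ 2 + 'i ^+ 2 * rr ^+ 2) / 4
  by rewrite /yy; field.
rewrite sqrCi /rr sqrtCK tau2 (_ : 4 - (tau + 1) + -1 * (3 - tau) = 0) ?mul0r //.
ring.
Qed.

Lemma yy5 : yy ^+ 5 = -1.
Proof.
apply/eqP; rewrite -subr_eq0 opprK.
have -> : yy ^+ 5 + 1 = (yy + 1) * ((yy ^+ 2 - tau * yy + 1) * (yy ^+ 2 + (tau - 1) * yy + 1)
   + (tau ^+ 2 - tau - 1) * yy ^+ 2) by ring.
by rewrite yy_quad tau_t0 !mul0r addr0 mulr0.
Qed.

Lemma Re_xi : tau / 2 <= 'Re xi.
Proof.
have hr : tau / 2 \is Num.real by rewrite rpredM ?tau_real ?rpredV ?realn.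
have hr2 : rr / 2 \is Num.real by rewrite rpredM ?rr_real ?rpredV ?realn.
have := @rootC_Re_max _ 5 (-1) yy isT yy5.
rewrite /yy Im_rect ?Re_rect //; apply.
by apply: half_ge0; rewrite /rr sqrtC_ge0 three_tau.
Qed.

Lemma xi5 : xi ^+ 5 = -1. Proof. by rewrite /xi rootCK. Qed.

Lemma xi_norm : `|xi| = 1.
Proof.
have : `|xi| ^+ 5 = 1 by rewrite -normrX xi5 normrN1.
by move/eqP; rewrite pexpr_eq1 // => /eqP.
Qed.

Lemma xi_conj : xi^* * xi = 1.
Proof. by rewrite -normCKC xi_norm expr1n. Qed.

Lemma zetaE : xi^* = - xi ^+ 4.
Proof.
by rewrite -[xi^*]mulr1 -[1]opprK -xi5 exprS mulrN mulrA xi_conj mul1r.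
Qed.

Lemma xi_neq : xi + 1 != 0.
Proof.
apply/negP => /eqP h.
have e : xi = -1 by apply/eqP; rewrite -subr_eq0 opprK h.
have := Re_xi; rewrite e; have /Creal_ReP -> : (-1 : algC) \is Num.real by rewrite rpredN rpred1.
move=> h2; have := lt_le_trans (divr_gt0 tau_gt0 (ltr0n _ 2)) h2.
by rewrite ltr0N1.
Qed.

Lemma Phi0 : xi ^+ 4 - xi ^+ 3 + xi ^+ 2 - xi + 1 = 0.
Proof.
have : (xi + 1) * (xi ^+ 4 - xi ^+ 3 + xi ^+ 2 - xi + 1) = 0.
  have -> : (xi + 1) * (xi ^+ 4 - xi ^+ 3 + xi ^+ 2 - xi + 1) = xi ^+ 5 + 1 by ring.
  by rewrite xi5 addNr.
by move/eqP; rewrite mulf_eq0 (negbTE xi_neq) /= => /eqP.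
Qed.

Lemma xi_tau : xi - xi ^+ 4 = tau.
Proof.
set c := xi - xi ^+ 4.
have c2 : c ^+ 2 - c - 1 = 0.
  have -> : c ^+ 2 - c - 1 = (xi ^+ 4 - xi ^+ 3 + xi ^+ 2 - xi + 1)
     + (xi ^+ 5 + 1) * (xi ^+ 3 - 2) by rewrite /c; ring.
  by rewrite Phi0 xi5 addNr mul0r addr0.
have : (c - tau) * (c - tau') = 0.
  have -> : (c - tau) * (c - tau') = c ^+ 2 - (tau + tau') * c + tau * tau' by ring.
  by rewrite tau_sum tau_prod mul1r -c2; ring.
move/eqP; rewrite mulf_eq0 !subr_eq0 => /orP [/eqP // | /eqP hc].
have : tau <= c.
  have := Re_xi; rewrite ReE /c zetaE.
  by rewrite ler_pM2r ?invr_gt0 ?ltr0n.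
rewrite hc => h; have := lt_trans (le_lt_trans h tau'_lt0) tau_gt0.
by rewrite ltxx.
Qed.

Lemma zeta2 : xi^* ^+ 2 = - xi ^+ 3.
Proof.
by rewrite -[_ ^+ 2]mulr1 -[1]opprK -xi5 (exprD xi 2 3) mulrN mulrA -exprMn xi_conj expr1n mul1r.
Qed.
Lemma zeta3 : xi^* ^+ 3 = - xi ^+ 2.
Proof.
by rewrite -[_ ^+ 3]mulr1 -[1]opprK -xi5 (exprD xi 3 2) mulrN mulrA -exprMn xi_conj expr1n mul1r.
Qed.
Lemma zeta4 : xi^* ^+ 4 = - xi.
Proof.
by rewrite -[_ ^+ 4]mulr1 -[1]opprK -xi5 (exprD xi 4 1) mulrN mulrA -exprMn xi_conj expr1n mul1r expr1.
Qed.

Lemma xi14_neq : xi + xi ^+ 4 != 0.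
Proof.
apply/negP => /eqP h.
have h4 : xi ^+ 4 = - xi by apply/eqP; rewrite -addr_eq0 addrC h.
have h2 : xi ^+ 2 = 1.
  apply: oppr_inj; rewrite -xi5 (exprS xi 4) h4 mulrN expr2 //.
have : xi ^+ 4 = 1 by rewrite (exprM xi 2 2) h2 expr1n.
rewrite h4 => e; have := xi_neq; by rewrite -e subrr eqxx.
Qed.

Lemma xi23 : xi ^+ 2 - xi ^+ 3 = tau - 1.
Proof.
have -> : tau - 1 = tau ^+ 2 - 2 by rewrite tau2; ring.
rewrite -xi_tau.
have -> : (xi - xi ^+ 4) ^+ 2 - 2 = xi ^+ 2 - xi ^+ 3 + (xi ^+ 5 + 1) * (xi ^+ 3 - 2) by ring.
by rewrite xi5 addNr mul0r addr0.
Qed.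

Lemma cD (a b : algC) : (a + b)^* = a^* + b^*.
Proof. by rewrite rmorphD. Qed.
Lemma cterm (d : int) k : (d%:~R * xi ^+ k)^* = d%:~R * xi^* ^+ k.
Proof. by rewrite rmorphM rmorph_int rmorphXn. Qed.
Lemma cterm1 (d : int) : (d%:~R * xi)^* = d%:~R * xi^*.
Proof. by rewrite rmorphM rmorph_int. Qed.

Lemma key5 (d0 d1 d2 d3 d4 : int) (x : algC) : x \is Num.real ->
  x = d0%:~R + d1%:~R * xi + d2%:~R * xi ^+ 2 + d3%:~R * xi ^+ 3 + d4%:~R * xi ^+ 4 ->
  [/\ d3 = - d2, d4 = - d1 & x = (d0 - d2)%:~R + (d1 + d2)%:~R * tau].
Proof.
move=> xr hx.
have hc : x^* = d0%:~R - d1%:~R * xi ^+ 4 - d2%:~R * xi ^+ 3 - d3%:~R * xi ^+ 2 - d4%:~R * xi.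
  rewrite hx !cD !cterm cterm1 conj_intr ?intr_int // zeta2 zeta3 zeta4 zetaE; ring.
have e0 : (xi + xi ^+ 4) * ((d1 + d4)%:~R + (d2 + d3)%:~R * tau) = 0.
  have -> : (xi + xi ^+ 4) * ((d1 + d4)%:~R + (d2 + d3)%:~R * tau) = x - x^*
     + (d2 + d3)%:~R * ((xi + xi ^+ 4) * (xi - xi ^+ 4) - (xi ^+ 2 + xi ^+ 3)).
    rewrite hc hx !intrD -xi_tau; ring.
  have /CrealP -> : x \is Num.real by [].
  rewrite subrr add0r.
  have -> : (xi + xi ^+ 4) * (xi - xi ^+ 4) - (xi ^+ 2 + xi ^+ 3) = - xi ^+ 3 * (xi ^+ 5 + 1) by ring.
  by rewrite xi5 addNr !mulr0.
move/eqP: e0; rewrite mulf_eq0 (negbTE xi14_neq) /= => /eqP /tau_irr [h14 h23].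
have e3 : d3 = - d2 by lia.
have e4 : d4 = - d1 by lia.
split => //; rewrite hx e3 e4 !intrN intrB intrD -xi_tau.
have -> : xi ^+ 3 = xi ^+ 2 - (tau - 1) by rewrite -xi23; ring.
rewrite -xi_tau; ring.
Qed.

Lemma natzR (n : nat) : ((n%:Z)%:~R : algC) = n%:R.
Proof. by []. Qed.

Lemma bump0 k : bump 0 k = k.+1. Proof. by []. Qed.

Lemma key (c : 'I_10 -> nat) (x : algC) : x \is Num.real ->
  x = \sum_(j < 10) (c j)%:R * xi ^+ j ->
  exists d0 d1 d2 : int, x = (d0 - d2)%:~R + (d1 + d2)%:~R * tau /\
     (absz d0 + 2 * absz d1 + 2 * absz d2 <= \sum_(j < 10) c j)%N.
Proof.
move=> xr hx.
pose f k := c (inord k).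
have hc : forall j : 'I_10, c j = f j by move=> j; rewrite /f inord_val.
rewrite (eq_bigr (fun j : 'I_10 => f j)); last by move=> j _; rewrite hc.
rewrite (eq_bigr (fun j : 'I_10 => (f j)%:R * xi ^+ j)) in hx; last by move=> j _; rewrite hc.
rewrite !big_ord_recl big_ord0 /= !bump0 in hx *.
have := @key5 ((f 0%N)%:Z - (f 5%N)%:Z) ((f 1%N)%:Z - (f 6%N)%:Z) ((f 2%N)%:Z - (f 7%N)%:Z)
   ((f 3%N)%:Z - (f 8%N)%:Z) ((f 4%N)%:Z - (f 9%N)%:Z) x xr.
case.
  rewrite hx !intrB !natzR.
  rewrite (exprD xi 5 1) (exprD xi 5 2) (exprD xi 5 3) (exprD xi 5 4) xi5 /=.
  ring.
move=> h3 h4 hx'; do 3 eexists; split; first exact: hx'.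
move: h3 h4; lia.
Qed.

Lemma normz (d : int) : `|(d%:~R : algC)| = (absz d)%:R.
Proof. by rewrite -intr_norm -abszE. Qed.

Lemma bound (t : algC) (d0 d1 d2 : int) : `|t| <= 2 -> `|t - 1| <= 2 ->
  `|(d0 - d2)%:~R + (d1 + d2)%:~R * t| <= ((absz d0 + 2 * absz d1 + 2 * absz d2)%N)%:R.
Proof.
move=> h1 h2.
have -> : (d0 - d2)%:~R + (d1 + d2)%:~R * t = d0%:~R + d1%:~R * t + d2%:~R * (t - 1)
  by rewrite intrB intrD; ring.
have E2 : forall a : nat, (a%:R + (a%:R + 0) : algC) = a%:R * 2 by move=> a; ring.
rewrite !natrD !E2.
apply: (le_trans (ler_normD _ _)); apply: lerD; last first.
  by rewrite normrM normz ler_wpM2l ?ler0n.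
apply: (le_trans (ler_normD _ _)); apply: lerD; first by rewrite normz.
by rewrite normrM normz ler_wpM2l ?ler0n.
Qed.

Lemma norm_le2 (t : algC) : t \is Num.real -> 0 <= t + 2 -> 0 <= 2 - t -> `|t| <= 2.
Proof.
move=> tr h1 h2; rewrite real_ler_norml //; apply/andP; split.
  by rewrite -subr_ge0 opprK.
by rewrite -subr_ge0.
Qed.

Lemma IccP n (y : algC) : y \is Num.real -> 0 <= y + n%:R -> 0 <= n%:R - y -> Icc n y.
Proof.
move=> yr h1 h2; split => //; split; first by rewrite -subr_ge0 opprK.
by rewrite -subr_ge0.
Qed.

Lemma Icc_norm n (y : algC) : y \is Num.real -> `|y| <= n%:R -> Icc n y.
Proof.
move=> yr; rewrite real_ler_norml // => /andP [h1 h2]; by split.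
Qed.

Lemma nn (a : algC) : 0 <= a -> 0 <= a / 2. Proof. exact: half_ge0. Qed.

Lemma tau_b1 : `|tau| <= 2.
Proof.
apply: norm_le2; first exact: tau_real.
  have -> : tau + 2 = ((s5 - 2) + 7) / 2 by rewrite /tau; field.
  by apply: nn; rewrite addr_ge0 ?s5_2 ?ler0n.
have -> : 2 - tau = (3 - s5) / 2 by rewrite /tau; field.
by apply: nn; rewrite s5_3.
Qed.
Lemma tau_b2 : `|tau - 1| <= 2.
Proof.
apply: norm_le2; first by rewrite rpredB ?tau_real ?rpred1.
  have -> : tau - 1 + 2 = ((s5 - 2) + 5) / 2 by rewrite /tau; field.
  by apply: nn; rewrite addr_ge0 ?s5_2 ?ler0n.
have -> : 2 - (tau - 1) = ((3 - s5) + 2) / 2 by rewrite /tau; field.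
by apply: nn; rewrite addr_ge0 ?s5_3 ?ler0n.
Qed.
Lemma tau'_b1 : `|tau'| <= 2.
Proof.
apply: norm_le2; first exact: tau'_real.
  have -> : tau' + 2 = ((3 - s5) + 2) / 2 by rewrite /tau'; field.
  by apply: nn; rewrite addr_ge0 ?s5_3 ?ler0n.
have -> : 2 - tau' = ((s5 - 2) + 5) / 2 by rewrite /tau'; field.
by apply: nn; rewrite addr_ge0 ?s5_2 ?ler0n.
Qed.
Lemma tau'_b2 : `|tau' - 1| <= 2.
Proof.
apply: norm_le2; first by rewrite rpredB ?tau'_real ?rpred1.
  have -> : tau' - 1 + 2 = (3 - s5) / 2 by rewrite /tau'; field.
  by apply: nn; rewrite s5_3.
have -> : 2 - (tau' - 1) = ((s5 - 2) + 7) / 2 by rewrite /tau'; field.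
by apply: nn; rewrite addr_ge0 ?s5_2 ?ler0n.
Qed.

Lemma abreal (a b : int) (t : algC) : t \is Num.real -> a%:~R + b%:~R * t \is Num.real.
Proof. by move=> tr; rewrite rpredD ?rpredM ?realz. Qed.

Lemma notL n (a b : int) :
  (forall d0 d1 d2 : int, d0 - d2 = a -> d1 + d2 = b ->
     (n < absz d0 + 2 * absz d1 + 2 * absz d2)%N) ->
  ~ L n (a%:~R + b%:~R * tau).
Proof.
move=> H [xr [c [hc hx]]].
have [d0 [d1 [d2 [e hb]]]] := @key c _ xr hx.
have : ((d0 - d2 - a)%:~R + (d1 + d2 - b)%:~R * tau : algC) = 0.
  move: e; rewrite !(intrB, intrD) => e.
  have -> : (d0%:~R - d2%:~R - a%:~R + (d1%:~R + d2%:~R - b%:~R) * tau : algC)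
    = (d0%:~R - d2%:~R + (d1%:~R + d2%:~R) * tau) - (a%:~R + b%:~R * tau) by ring.
  by rewrite e subrr.
move/tau_irr => [h1 h2].
have := H d0 d1 d2 ltac:(lia) ltac:(lia); lia.
Qed.

Ltac ge0_as r := match goal with |- is_true (0 <= ?e) => rewrite (_ : e = r) end.

Theorem lemma6p10 (n : nat) (hn : (3 <= n)%N) :
  (forall x : algC, L n x -> Sigma (Icc n) x /\ Icc n x) /\
  (exists x : algC, Sigma (Icc n) x /\ Icc n x /\ ~ L n x).
Proof.
split.
  move=> x [xr [c [hc hx]]].
  have [d0 [d1 [d2 [e hb]]]] := @key c _ xr hx.
  have hb' : (((absz d0 + 2 * absz d1 + 2 * absz d2)%N)%:R : algC) <= n%:R.
    by rewrite ler_nat (leq_trans hb hc).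
  split.
    exists (d0 - d2), (d1 + d2); split => //.
    apply: Icc_norm; first exact: abreal tau'_real.
    exact: le_trans (@bound tau' d0 d1 d2 tau'_b1 tau'_b2) hb'.
  apply: Icc_norm => //; rewrite e.
  exact: le_trans (@bound tau d0 d1 d2 tau_b1 tau_b2) hb'.
have [n3 | n4] : n = 3%N \/ (4 <= n)%N by lia.
  subst n; exists ((-1)%:~R + 2%:~R * tau); split; last split.
  - exists (-1), 2; split => //; apply: IccP; first exact: abreal tau'_real.
      ge0_as (3 - s5); first by rewrite s5_3.
      by rewrite /tau' intrN natzR natzR; field.
    ge0_as ((s5 - 2) + 5); first by rewrite addr_ge0 ?s5_2 ?ler0n.
    by rewrite /tau' intrN natzR natzR; field.
  - apply: IccP; first exact: abreal tau_real.
      ge0_as ((s5 - 2) + 5); first by rewrite addr_ge0 ?s5_2 ?ler0n.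
      by rewrite /tau intrN natzR natzR; field.
    ge0_as (3 - s5); first by rewrite s5_3.
    by rewrite /tau intrN natzR natzR; field.
  - apply: notL => d0 d1 d2 h1 h2; lia.
have [m ->] : exists m, n = (m + 4)%N by exists (n - 4)%N; lia.
exists ((- ((m + 2)%N%:Z))%:~R + 3%:~R * tau); split; last split.
- exists (- ((m + 2)%N%:Z)), 3; split => //; apply: IccP; first exact: abreal tau'_real.
    ge0_as ((7 - 3 * s5) / 2); first by rewrite half_ge0 ?s5_7.
    by rewrite /tau' intrN !natzR !natrD; field.
  ge0_as (m%:R * 2 + (3 * (s5 - 2) + 15) / 2).
    apply: addr_ge0; first by rewrite mulr_ge0 ?ler0n.
    by apply: half_ge0; apply: addr_ge0; [apply: mulr_ge0; [exact: ler0n | exact: s5_2] | exact: ler0n].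
  by rewrite /tau' intrN !natzR !natrD; field.
- apply: IccP; first exact: abreal tau_real.
    ge0_as ((3 * (s5 - 2) + 13) / 2).
      by apply: half_ge0; apply: addr_ge0; [apply: mulr_ge0; [exact: ler0n | exact: s5_2] | exact: ler0n].
    by rewrite /tau intrN !natzR !natrD; field.
  ge0_as (m%:R * 2 + (3 * (3 - s5)) / 2).
    apply: addr_ge0; first by rewrite mulr_ge0 ?ler0n.
    by apply: half_ge0; apply: mulr_ge0; [exact: ler0n | exact: s5_3].
  by rewrite /tau intrN !natzR !natrD; field.
- apply: notL => d0 d1 d2 h1 h2; lia.
Qed.
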